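(* Let $0<\varepsilon\le 1$, let $A>0$, and let $x_1,\dots,x_k>0$ be item sizes with $\sum_{i=1}^k x_i\le A$ and $k\ge\lceil 1/\varepsilon^2\rceil$. Let $A'$ be the largest number of the form $(1+\varepsilon)^z$, $z\in\mathbb{Z}$, with $A'\le A$. Remove items one at a time in order of non-increasing size (largest first) until the total size of the remaining items is at most $A'$. Then at least $(1-2\varepsilon)k$ items remain. *)

(* Defs.v *)
From Stdlib Require Export Reals List Sorted Permutation ZArith.
Export ListNotations.
Open Scope R_scope.

Definition lsum (l : list R) : R := fold_right Rplus 0 l.

(* ceiling of a real: ceil x = - floor (- x), with floor y = up y - 1 *)
Definition Rceil (x : R) : Z := (- (up (- x) - 1))%Z.

Definition largest_pow_below (eps A A' : R) : Prop :=
  (exists z : Z, A' = powerRZ (1 + eps) z) /\ A' <= A /\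
  (forall z : Z, powerRZ (1 + eps) z <= A -> powerRZ (1 + eps) z <= A').

Definition nonincreasing (s : list R) : Prop := Sorted Rge s.

(* j is the number of items removed by the process: removing the first j items
   of s (largest first) is the first time the remaining total is <= A' *)
Definition removal_count (s : list R) (A' : R) (j : nat) : Prop :=
  lsum (skipn j s) <= A' /\ (forall m : nat, (m < j)%nat -> lsum (skipn m s) > A').

(* Main.v *)
Require Import Defs.
From Stdlib Require Import Reals List Sorted Permutation ZArith.
From Stdlib Require Import Lra Lia Psatz.
Open Scope R_scope.

Lemma lsum_app l1 l2 : lsum (l1 ++ l2) = lsum l1 + lsum l2.
Proof. induction l1 as [|a l IH]; simpl; [lra| unfold lsum in *; rewrite IH; lra]. Qed.

Lemma lsum_pos l : Forall (fun y => 0 < y) l -> l <> [] -> 0 < lsum l.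
Proof.
  induction l as [|a l IH]; intros H Hn; [congruence|].
  inversion H; subst. destruct l as [|b l]; simpl; [lra|].
  assert (0 < lsum (b :: l)) by (apply IH; auto; discriminate).
  unfold lsum in *; simpl in *; lra.
Qed.

Lemma lsum_nonneg l : Forall (fun y => 0 < y) l -> 0 <= lsum l.
Proof. induction 1; simpl; unfold lsum in *; simpl in *; lra. Qed.

Lemma lsum_ge l c : Forall (fun y => y >= c) l -> lsum l >= INR (length l) * c.
Proof.
  induction 1; [simpl; lra|]. change (length (x :: l)) with (S (length l)). rewrite S_INR. unfold lsum in *; simpl in *; lra.
Qed.

Lemma lsum_le l c : Forall (fun y => y <= c) l -> lsum l <= INR (length l) * c.
Proof.
  induction 1; [simpl; lra|]. change (length (x :: l)) with (S (length l)). rewrite S_INR. unfold lsum in *; simpl in *; lra.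
Qed.

Lemma ss_app l1 l2 : StronglySorted Rge (l1 ++ l2) ->
  forall a b, In a l1 -> In b l2 -> a >= b.
Proof.
  induction l1 as [|x l IH]; simpl; intros H a b Ha Hb; [contradiction|].
  inversion H; subst. destruct Ha as [<-|Ha].
  - rewrite Forall_forall in H3. apply H3. apply in_or_app; auto.
  - eauto.
Qed.

Lemma ss_suffix (l1 l2 : list R) : StronglySorted Rge (l1 ++ l2) -> StronglySorted Rge l2.
Proof. induction l1; simpl; auto. intro H; inversion H; auto. Qed.

Lemma avg_lemma s m : Sorted Rge s -> (m <= length s)%nat ->
  INR (length s) * lsum (firstn m s) >= INR m * lsum s.
Proof.
  intros Hs Hm.
  assert (SS : StronglySorted Rge s).
  { apply Sorted_StronglySorted; [intros a b c; lra|exact Hs]. }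
  pose proof (firstn_skipn m s) as E.
  set (T := firstn m s) in *. set (U := skipn m s) in *.
  assert (LT : length T = m) by (apply firstn_length_le; auto).
  assert (LS : length s = (m + length U)%nat) by (rewrite <- E, length_app; lia).
  assert (Hsum : lsum s = lsum T + lsum U) by (rewrite <- E at 1; apply lsum_app).
  rewrite <- E in SS.
  destruct U as [|c U'] eqn:HU.
  - rewrite LS, Hsum. simpl length. rewrite Nat.add_0_r. assert (lsum [] = 0) by reflexivity. nra.
  - assert (F1 : Forall (fun y => y >= c) T).
    { apply Forall_forall; intros a Ha. eapply ss_app; eauto. simpl; auto. }
    assert (F2 : Forall (fun y => y <= c) (c :: U')).
    { apply Forall_forall; intros b Hb.
      assert (SSU : StronglySorted Rge (c :: U')).
      { eapply ss_suffix; exact SS. }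
      destruct Hb as [<-|Hb]; [lra|]. inversion SSU as [|? ? ? H2].
      rewrite Forall_forall in H2. specialize (H2 b Hb). lra. }
    apply lsum_ge in F1. apply lsum_le in F2. rewrite LT in F1.
    rewrite LS, plus_INR, Hsum.
    set (k := INR (length (c :: U'))) in *.
    assert (0 <= INR m) by apply pos_INR.
    assert (0 <= k) by apply pos_INR.
    nra.
Qed.

Theorem lemma5 (eps A A' : R) (x s : list R) (j : nat) :
  0 < eps -> eps <= 1 -> 0 < A ->
  Forall (fun xi => 0 < xi) x ->
  lsum x <= A ->
  (Z.of_nat (length x) >= Rceil (1 / eps ^ 2))%Z ->
  largest_pow_below eps A A' ->
  Permutation x s -> nonincreasing s ->
  removal_count s A' j ->
  (1 - 2 * eps) * INR (length x) <= INR (length x - j).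
Proof.
  intros He He1 HA Hpos Hsum Hceil [[z Hz] [HA' Hmax]] Hperm Hsort [Hj1 Hj2].
  assert (HA'pos : 0 < A') by (rewrite Hz; apply powerRZ_lt; lra).
  assert (HA'big : A' * (1 + eps) > A).
  { destruct (Rle_or_lt (A' * (1+eps)) A) as [H|H]; [|exact H].
    exfalso. assert (powerRZ (1+eps) (z+1) <= A').
    { apply Hmax. rewrite powerRZ_add by lra. rewrite <- Hz. simpl. lra. }
    rewrite powerRZ_add in H0 by lra. rewrite <- Hz in H0. simpl in H0. nra. }
  assert (Hn : INR (length x) * eps ^ 2 >= 1).
  { unfold Rceil in Hceil. apply Z.ge_le in Hceil. apply IZR_le in Hceil.
    rewrite <- INR_IZR_INZ in Hceil. rewrite opp_IZR, minus_IZR in Hceil.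
    destruct (archimed (- (1 / eps ^ 2))) as [_ H2].
    assert (INR (length x) >= 1 / eps ^ 2) by lra.
    assert (0 < eps ^ 2) by nra.
    apply (Rmult_ge_compat_r (eps ^ 2)) in H; [|lra].
    unfold Rdiv in H. rewrite Rmult_assoc, Rinv_l in H; lra. }
  pose proof (Permutation_length Hperm) as Hlen.
  assert (Hps : Forall (fun xi => 0 < xi) s) by (eapply Permutation_Forall; eauto).
  assert (HS : lsum s = lsum x).
  { clear -Hperm. induction Hperm; unfold lsum in *; simpl in *; lra. }
  set (n := length x) in *.
  assert (Hjn : (j <= n)%nat).
  { destruct (le_lt_dec j n) as [h|h]; auto. specialize (Hj2 n h).
    rewrite Hlen, skipn_all in Hj2. unfold lsum in Hj2; simpl in Hj2. lra. }
  rewrite minus_INR by exact Hjn.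
  assert (0 <= INR n) by apply pos_INR.
  destruct j as [|m]; [simpl; nra|].
  assert (Hsk : lsum (skipn m s) > A') by (apply Hj2; lia).
  pose proof (avg_lemma s m Hsort ltac:(lia)) as Hav.
  rewrite <- Hlen in Hav. fold n in Hav.
  assert (Hsp : lsum s = lsum (firstn m s) + lsum (skipn m s)).
  { rewrite <- lsum_app, firstn_skipn. reflexivity. }
  assert (Hnz : s <> []) by (intro; subst; simpl in *; lia).
  assert (HSpos : 0 < lsum s) by (apply lsum_pos; auto).
  set (F := lsum (firstn m s)) in *.
  assert (HF : 0 <= F).
  { apply lsum_nonneg. rewrite <- (firstn_skipn m s) in Hps. apply Forall_app in Hps. tauto. }
  assert (Hk : lsum s * eps > F).
  { nra. }
  assert (Hmlt : INR m < INR n * eps).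
  { set (S0 := lsum s) in *.
    assert (Hn1 : 0 < INR n) by (apply lt_0_INR; lia).
    assert (INR n * F < INR n * (S0 * eps)) by (apply Rmult_lt_compat_l; lra).
    assert (INR m * S0 < (INR n * eps) * S0) by lra.
    apply Rmult_lt_reg_r with S0; lra. }
  rewrite S_INR. nra.
Qed.
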